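(* Let $k \ge 2$ be an integer. Let $\mathcal{G}$ be a hereditary class of finite simple graphs such that every graph $G \in \mathcal{G}$ contains a $k$-simplicial vertex. Then every graph in $\mathcal{G}$ with at least one edge is $(k+1)$-divisible.
   Context: A class of graphs is hereditary if it is closed under taking induced subgraphs. A vertex $v$ of a graph $G$ is $k$-simplicial if its neighborhood $N_G(v)$ can be partitioned into $k$ (possibly empty) cliques. For an integer $m \ge 2$, a graph $G$ with at least one edge is $m$-divisible if for every induced subgraph $H$ of $G$ with at least one edge, the vertex set $V(H)$ can be partitioned into $m$ sets, none of which contains a maximum clique of $H$ (i.e. none contains a clique of size $\omega(H)$, where $\omega(H)$ is the clique number of $H$). *)

(* Defs.v *)
From mathcomp Require Import all_boot.
Set Implicit Arguments. Unset Strict Implicit. Unset Printing Implicit Defensive.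

Definition simple_graph (T : finType) (e : rel T) : Prop :=
  symmetric e /\ irreflexive e.

Definition clique (T : finType) (e : rel T) (A : {set T}) : bool :=
  [forall x in A, forall y in A, (x != y) ==> e x y].

Definition nbhd (T : finType) (e : rel T) (v : T) : {set T} := [set u | e v u].

(* partition of B into m possibly empty parts Q i *)
Definition is_partition_into (T : finType) (m : nat) (Q : 'I_m -> {set T})
    (B : {set T}) : Prop :=
  (forall i j, i != j -> [disjoint Q i & Q j]) /\ \bigcup_(i < m) Q i = B.

Definition k_simplicial (T : finType) (e : rel T) (k : nat) (v : T) : Prop :=
  exists Q : 'I_k -> {set T},
    is_partition_into Q (nbhd e v) /\ forall i, clique e (Q i).

Definition omega_in (T : finType) (e : rel T) (S : {set T}) : nat :=
  \max_(A : {set T} | (A \subset S) && clique e A) #|A|.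

Definition has_edge_in (T : finType) (e : rel T) (S : {set T}) : Prop :=
  exists x y, [/\ x \in S, y \in S & e x y].

Definition divisible (T : finType) (e : rel T) (m : nat) : Prop :=
  has_edge_in e [set: T] /\
  forall S : {set T}, has_edge_in e S ->
    exists Q : 'I_m -> {set T}, is_partition_into Q S /\
      forall i (A : {set T}), A \subset Q i -> clique e A -> #|A| < omega_in e S.

Definition induced_type (T : finType) (S : {set T}) : finType :=
  {x : T | x \in S}.
Definition induced_rel (T : finType) (e : rel T) (S : {set T}) :
  rel (induced_type S) := fun x y => e (val x) (val y).

Definition graph_class := forall T : finType, rel T -> Prop.

Definition hereditary (P : graph_class) : Prop :=
  forall (T : finType) (e : rel T) (S : {set T}),
    P T e -> P (@induced_type T S) (@induced_rel T e S).

(* Main.v *)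
Require Import Defs.
From mathcomp Require Import all_boot zify.

Lemma card_bigcup_le (T : finType) n (F : 'I_n -> {set T}) :
  #|\bigcup_(i < n) F i| <= \sum_(i < n) #|F i|.
Proof.
elim: n F => [|n IH] F; first by rewrite !big_ord0 cards0.
rewrite !big_ord_recr /=.
apply: leq_trans (leq_card_setU _ _) _.
by rewrite leq_add2r IH.
Qed.

Lemma card_bigcup_disj (T : finType) n (F : 'I_n -> {set T}) :
  (forall i j, i != j -> [disjoint F i & F j]) ->
  #|\bigcup_(i < n) F i| = \sum_(i < n) #|F i|.
Proof.
elim: n F => [|n IH] F dF; first by rewrite !big_ord0 cards0.
rewrite !big_ord_recr /=.
have/leqifP := leq_card_setU (\bigcup_(i < n) F (widen_ord (leqnSn n) i)) (F ord_max).
rewrite (_ : [disjoint _ & _]) => [/eqP ->|].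
  rewrite IH // => i j ij; apply: dF.
  by apply: contra ij => /eqP [] ij'; apply/eqP/val_inj.
rewrite disjoint_sym; apply: bigcup_disjoint => i _; apply: dF.
by rewrite -val_eqE /= neq_ltn ltn_ord orbT.
Qed.

Lemma cliqueP (T : finType) (e : rel T) (A : {set T}) :
  reflect (forall x y, x \in A -> y \in A -> x != y -> e x y) (clique e A).
Proof.
apply: (iffP idP).
  move=> /forallP H x y hx hy xy.
  by move: (H x) => /implyP/(_ hx)/forallP/(_ y)/implyP/(_ hy)/implyP/(_ xy).
move=> H; apply/forallP => x; apply/implyP => hx; apply/forallP => y.
by apply/implyP => hy; apply/implyP => xy; apply: H.
Qed.

Lemma sum_const_ord n c : \sum_(i < n) c = c * n.
Proof. by rewrite big_const_ord iter_addn_0. Qed.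

Lemma count_contra (T : finType) (e : rel T) k w x (S : {set T})
  (X : 'I_k.+1 -> {set T}) (C : 'I_k -> {set T}) (K : 'I_k.+1 -> {set T}) :
 symmetric e -> irreflexive e -> 2 <= w -> x \in S ->
 (forall i j, i != j -> [disjoint X i & X j]) ->
 (forall i, clique e (C i)) -> (forall u, u \in S -> e x u -> exists i, u \in C i) ->
 (forall A : {set T}, A \subset S -> clique e A -> #|A| <= w) ->
 (forall j, K j \subset X j) -> (forall j, K j \subset S) ->
 (forall j u, u \in K j -> e x u) -> (forall j, w.-1 <= #|K j|) -> False.
Proof.
move=> sym irr w2 xS dX cC covC hw KX KS Kx Kw.
pose D i := C i :&: S :&: [set u | e x u].
have hD i : #|D i| <= w.-1.
  have xD : x \notin D i by rewrite !inE irr andbF.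
  have := hw (x |: D i).
  rewrite cardsU1 xD /= => h.
  have: 1 + #|D i| <= w; last by lia.
  apply: h.
    apply/subsetP => y; rewrite !inE => /orP [/eqP -> //|/andP [/andP [_ ->] _] //].
  apply/cliqueP => y z; rewrite !inE.
  move=> /orP [/eqP ->|/andP [/andP [yC _] ey]] /orP [/eqP ->|/andP [/andP [zC _] ez]].
  - by rewrite eqxx.
  - by [].
  - by rewrite sym.
  - by move/cliqueP: (cC i); apply.
have hU : \bigcup_(j < k.+1) K j \subset \bigcup_(i < k) D i.
  apply/bigcupsP => j _; apply/subsetP => u uK.
  have uS : u \in S by apply: (subsetP (KS j)).
  have ex := Kx j u uK.
  have [i ui] := covC u uS ex.
  by apply/bigcupP; exists i => //; rewrite !inE ui uS ex.
have h1 : \sum_(j < k.+1) w.-1 <= \sum_(j < k.+1) #|K j| by apply: leq_sum.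
have h2 : \sum_(i < k) #|D i| <= \sum_(i < k) w.-1 by apply: leq_sum.
rewrite !sum_const_ord in h1 h2.
have dK : forall i j, i != j -> [disjoint K i & K j].
  move=> i j ij; apply: (disjointWl (KX i)); apply: (disjointWr (KX j)); exact: dX.
rewrite -(@card_bigcup_disj _ _ K dK) in h1.
have h3 := subset_leq_card hU.
have h4 := @card_bigcup_le _ _ D.
have : w.-1 * k.+1 <= w.-1 * k by apply: (leq_trans h1 (leq_trans h3 (leq_trans h4 h2))).
rewrite leq_pmul2l; [by rewrite ltnn | by lia].
Qed.

Lemma disj_by (T : finType) (A B : {set T}) :
  (forall y, y \in A -> y \in B -> False) -> [disjoint A & B].
Proof.
move=> H; rewrite disjoint_subset; apply/subsetP => y yA; rewrite inE.
by apply/negP => yB; exact: (H y yA yB).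
Qed.

Lemma main_ind (T : finType) (e : rel T) k w :
 symmetric e -> irreflexive e -> 2 <= w ->
 (forall S : {set T}, 0 < #|S| -> exists x, x \in S /\ exists C : 'I_k -> {set T},
    (forall i, clique e (C i)) /\ forall u, u \in S -> e x u -> exists i, u \in C i) ->
 forall n (S : {set T}), #|S| <= n ->
 (forall A : {set T}, A \subset S -> clique e A -> #|A| <= w) ->
 exists Q : 'I_k.+1 -> {set T}, is_partition_into Q S /\
   forall i (A : {set T}), A \subset Q i -> clique e A -> #|A| < w.
Proof.
move=> sym irr w2 hsimp n.
elim: n => [|n IH] S hS hw; case: (posnP #|S|) => [S0|Spos].
- have -> := cards0_eq S0.
  exists (fun _ => set0); split; last first.
    by move=> i A; rewrite subset0 => /eqP -> _; rewrite cards0; lia.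
  split; first by move=> i j _; apply: disj_by => y; rewrite inE.
  by rewrite big1.
- lia.
- have -> := cards0_eq S0.
  exists (fun _ => set0); split; last first.
    by move=> i A; rewrite subset0 => /eqP -> _; rewrite cards0; lia.
  split; first by move=> i j _; apply: disj_by => y; rewrite inE.
  by rewrite big1.
have [x [xS [C [cC covC]]]] := hsimp S Spos.
have hS' : #|S :\ x| <= n by move: hS; rewrite (cardsD1 x S) xS; lia.
have hw' : forall A : {set T}, A \subset S :\ x -> clique e A -> #|A| <= w.
  by move=> A AS; apply: hw; apply: subset_trans AS (subD1set S x).
have [X [[dX UX] cX]] := IH _ hS' hw'.
have XS i : X i \subset S :\ x by rewrite -UX; apply: (bigcup_sup i).
have xX i : x \notin X i.
  by apply/negP => /(subsetP (XS i)); rewrite !inE eqxx.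
pose bad j (A : {set T}) := [&& A \subset x |: X j, clique e A & w <= #|A|].
case: (boolP [forall j, [exists A, bad j A]]) => [allbad | /forallPn [j /existsPn nb]].
  pose K j := odflt set0 [pick A | bad j A] :\ x.
  have hK j : [/\ K j \subset X j, (forall u, u \in K j -> e x u) & w.-1 <= #|K j|].
    have : bad j (odflt set0 [pick A | bad j A]).
      case: pickP => [A //|none] /=.
      by move/forallP: allbad => /(_ j) /existsP [A]; rewrite none.
    rewrite /K; move: (odflt _ _) => A /and3P [AX cA wA].
    have xA : x \in A.
      apply/negPn/negP => xA.
      have AXj : A \subset X j.
        apply/subsetP => y yA; move/subsetP: AX => /(_ y yA) /setU1P [yx|//].
        by move: xA; rewrite -yx yA.
      by have := cX j A AXj cA; lia.
    split.
    + apply/subsetP => y /setD1P [yx yA].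
      by move/subsetP: AX => /(_ y yA) /setU1P [/eqP yx'|//]; move: yx; rewrite yx'.
    + move=> u /setD1P [ux uA]; move/cliqueP: cA; apply => //.
      by rewrite eq_sym.
    + by move: wA; rewrite (cardsD1 x A) xA; lia.
  exfalso.
  apply: (@count_contra T e k w x S X C K) => //.
  - by move=> j; case: (hK j).
  - by move=> j; case: (hK j) => h _ _; apply: subset_trans h (subset_trans (XS j) (subD1set S x)).
  - by move=> j; case: (hK j).
  - by move=> j; case: (hK j).
exists (fun i => if i == j then x |: X j else X i); split; last first.
  move=> i A; case: eqP => [_|_] AQ cA.
    move: (nb A); rewrite /bad AQ cA /=; lia.
  exact: cX AQ cA.
split.
  move=> i i' ii'; case: eqP => [ij|nij]; case: eqP => [i'j|ni'j].
  - by move: ii'; rewrite ij i'j eqxx.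
  - subst i; apply: disj_by => y /setU1P [->|yX] yX'; first by move: (xX i'); rewrite yX'.
    by have := dX j i' ii' => /disjointFr /(_ yX); rewrite yX'.
  - subst i'; apply: disj_by => y yX /setU1P [yx|yX']; first by move: (xX i); rewrite -yx yX.
    by have := dX i j ii' => /disjointFr /(_ yX); rewrite yX'.
  - exact: dX.
apply/setP => y; apply/bigcupP/idP.
  case=> i _; case: eqP => _.
    move/setU1P => [->//|yX].
    by move/subsetP: (XS j) => /(_ y yX) /setD1P [].
  by move/(subsetP (XS i)) => /setD1P [].
move=> yS; case: (eqVneq y x) => [->|yx].
  by exists j => //; rewrite eqxx setU11.
have : y \in S :\ x by rewrite !inE yx.
rewrite -UX => /bigcupP [i _ yX]; exists i => //.
by case: eqP => [ij|_] //; rewrite -ij setU1r.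
Qed.

Theorem theorem1p5 (k : nat) (P : graph_class) :
  2 <= k ->
  hereditary P ->
  (forall (T : finType) (e : rel T), P T e -> simple_graph e ->
     0 < #|T| -> exists v : T, k_simplicial e k v) ->
  forall (T : finType) (e : rel T), P T e -> simple_graph e ->
    (exists x y : T, e x y) -> divisible e k.+1.
Proof.
move=> k2 hered hs T e PTe [sym irr] [x0 [y0 e0]].
split; first by exists x0, y0; rewrite !inE.
move=> S [x [y [xS yS exy]]].
have hw : forall A : {set T}, A \subset S -> clique e A -> #|A| <= omega_in e S.
  move=> A AS cA; rewrite /omega_in.
  by apply: (leq_bigmax_cond A (P := fun A : {set T} => (A \subset S) && clique e A)); rewrite AS cA.
have w2 : 2 <= omega_in e S.
  have xy : x != y by apply: contraTneq exy => ->; rewrite irr.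
  have := hw [set x; y].
  rewrite cards2 xy; apply.
    by apply/subsetP => z; rewrite !inE => /orP [] /eqP ->.
  apply/cliqueP => a b; rewrite !inE => /orP [] /eqP -> /orP [] /eqP ->;
    rewrite ?eqxx // => _.
  by rewrite sym.
have hsimp : forall S' : {set T}, 0 < #|S'| -> exists x, x \in S' /\
    exists C : 'I_k -> {set T},
    (forall i, clique e (C i)) /\ forall u, u \in S' -> e x u -> exists i, u \in C i.
  move=> S' /card_gt0P [z zS].
  have sg : simple_graph (@induced_rel T e S').
    by split; [move=> a1 b1; exact: sym | move=> a1; exact: irr].
  have pos : 0 < #|induced_type S'| by apply/card_gt0P; exists (exist _ z zS).
  have [v [Q [[dQ UQ] cQ]]] := hs _ _ (hered T e S' PTe) sg pos.
  exists (val v); split; first exact: valP.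
  exists (fun i => val @: Q i); split.
    move=> i; apply/cliqueP => p q /imsetP [a1 ha ->] /imsetP [b1 hb ->] ab.
    move/cliqueP: (cQ i) => /(_ a1 b1); apply => //.
    idtac.
  move=> u uS eu.
  have : (exist _ u uS : induced_type S') \in nbhd (@induced_rel T e S') v by rewrite inE.
  rewrite -UQ => /bigcupP [i _ ai]; exists i.
  by apply/imsetP; exists (exist _ u uS).
have [Q [pQ cQ]] := @main_ind T e k (omega_in e S) sym irr w2 hsimp #|S| S (leqnn _) hw.
by exists Q; split.
Qed.
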